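(* Let $\Omega\subset\mathbb{R}^d$ ($d=2,3$) be a bounded domain, $H=L_2(\Omega)$ with inner product $(u,v)=\int_\Omega u v\,dx$ and norm $\|u\|=(u,u)^{1/2}$, and $\boldsymbol H=(L_2(\Omega))^d$. Let $\mu,\lambda,\alpha,k,\nu$ be constants and $S\ge 0$ a constant. Consider the operators $$\mathcal{A}\boldsymbol v=-\mu\nabla^2\boldsymbol v-(\lambda+\mu)\,\mathrm{grad}\,\mathrm{div}\,\boldsymbol v \ \text{ in } \boldsymbol H,\qquad \mathcal{B}p=-\mathrm{div}\Big(\frac{k}{\nu}\,\mathrm{grad}\,p\Big)\ \text{ in } H,$$ where $\mathcal{A}$ is self-adjoint and nonnegative in $\boldsymbol H$ and $\mathcal{B}$ is self-adjoint and positive in $H$, and let $\mathcal{G}$ (gradient) and $\mathcal{D}$ (divergence) satisfy $(\mathcal{G}p,\boldsymbol u)=-(\mathcal{D}\boldsymbol u,p)$ for all $p,\boldsymbol u$. Let $(\boldsymbol u(t),p(t))$ be a solution of $$\mathcal{A}\boldsymbol u+\alpha\mathcal{G}p=0,\qquad \frac{d}{dt}\big(S\,p+\alpha\mathcal{D}\boldsymbol u\big)+\mathcal{B}p=f(t),\quad t>0,$$ with $p(0)=p_0$. Then for all $t>0$, $$\|\boldsymbol u(t)\|_{\mathcal{A}}^2+S\|p(t)\|^2\le \|\boldsymbol u(0)\|_{\mathcal{A}}^2+S\|p(0)\|^2+\frac12\int_0^t\|f(s)\|^2_{\mathcal{B}^{-1}}\,ds.$$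
   Context: This is the operator form of the linear poroelasticity (Biot) system: $\boldsymbol u$ is the displacement, $p$ the fluid pressure, $S=1/M$ with $M$ the Biot modulus, $k$ the permeability, $\nu$ the fluid viscosity, $\alpha$ the Biot–Willis coupling coefficient, $f$ a source term. The operators act on functions satisfying the homogeneous boundary conditions of the problem. Norms: $\|\boldsymbol u\|_{\mathcal{A}}=(\mathcal{A}\boldsymbol u,\boldsymbol u)^{1/2}$, $\|f\|_{\mathcal{B}^{-1}}=(\mathcal{B}^{-1}f,f)^{1/2}$. *)

(* Defs.v *)
From HB Require Import structures.
From mathcomp Require Import all_boot all_order all_algebra.
From mathcomp Require Import all_classical all_reals all_analysis.
Set Implicit Arguments. Unset Strict Implicit. Unset Printing Implicit Defensive.
Import Order.TTheory GRing.Theory Num.Theory.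
Import numFieldNormedType.Exports.
Local Open Scope ring_scope.

Definition is_inner_product (R : realType) (V : normedModType R)
    (ip : V -> V -> R) : Prop :=
  (forall (a : R) (x y z : V), ip (a *: x + y) z = a * ip x z + ip y z) /\
  (forall x y : V, ip x y = ip y x) /\
  (forall x : V, ip x x = `|x| ^+ 2).

Definition op_sqnorm (R : realType) (V : normedModType R)
    (ip : V -> V -> R) (A : V -> V) (u : V) : R := ip (A u) u.

Definition selfadjoint (R : realType) (V : normedModType R)
    (ip : V -> V -> R) (A : V -> V) : Prop :=
  forall x y : V, ip (A x) y = ip x (A y).

Definition nonneg_op (R : realType) (V : normedModType R)
    (ip : V -> V -> R) (A : V -> V) : Prop :=
  forall x : V, 0 <= ip (A x) x.

Definition positive_op (R : realType) (V : normedModType R)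
    (ip : V -> V -> R) (A : V -> V) : Prop :=
  forall x : V, x != 0 -> 0 < ip (A x) x.

(* Main.v *)
Set Warnings "-all".
Require Import Defs.
From HB Require Import structures.
From mathcomp Require Import all_boot all_order all_algebra.
From mathcomp Require Import all_classical all_reals all_analysis.
From mathcomp Require Import ring lra.
Import Order.TTheory GRing.Theory Num.Theory.
Import numFieldNormedType.Exports.
Local Open Scope classical_set_scope.
Local Open Scope ring_scope.
Set Implicit Arguments. Unset Strict Implicit.

Section IP.
Variables (R : realType) (V : normedModType R) (ip : V -> V -> R).
Hypothesis hip : is_inner_product ip.

Lemma ip0l z : ip 0 z = 0.
Proof.
case: hip => hl _.
have := hl 1 0 0 z; rewrite scaler0 addr0 mul1r => h.
have : ip 0 z + ip 0 z - ip 0 z = ip 0 z - ip 0 z by rewrite -h.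
by rewrite addrK subrr.
Qed.

Lemma ipDl x y z : ip (x + y) z = ip x z + ip y z.
Proof. by case: hip => hl _; rewrite -[x]scale1r hl mul1r scale1r. Qed.

Lemma ipZl a x z : ip (a *: x) z = a * ip x z.
Proof. by case: hip => hl _; rewrite -[a *: x]addr0 hl ip0l addr0. Qed.

Lemma ipC x y : ip x y = ip y x.
Proof. by case: hip => _ []. Qed.

Lemma ipNl x z : ip (- x) z = - ip x z.
Proof. by rewrite -scaleN1r ipZl mulN1r. Qed.

Lemma ipBl x y z : ip (x - y) z = ip x z - ip y z.
Proof. by rewrite ipDl ipNl. Qed.

Lemma ipDr x y z : ip z (x + y) = ip z x + ip z y.
Proof. by rewrite ipC ipDl !(ipC _ z). Qed.

Lemma ipZr a x z : ip z (a *: x) = a * ip z x.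
Proof. by rewrite ipC ipZl ipC. Qed.

Lemma ipBr x y z : ip z (x - y) = ip z x - ip z y.
Proof. by rewrite ipC ipBl !(ipC _ z). Qed.

Lemma ipNr x z : ip z (- x) = - ip z x.
Proof. by rewrite ipC ipNl ipC. Qed.

Lemma ipxx x : ip x x = `|x| ^+ 2.
Proof. by case: hip => _ []. Qed.

Lemma ip_polar x y : ip x y = (`|x + y| ^+ 2 - `|x - y| ^+ 2) / 4.
Proof.
rewrite -!ipxx !ipDl !ipNl !ipDr !ipNr (ipC y x).
by field.
Qed.

Lemma ip_cvg T (F : set_system T) (FF : Filter F) (a b : T -> V) a0 b0 :
  a @ F --> a0 -> b @ F --> b0 ->
  (fun t => ip (a t) (b t)) @ F --> ip a0 b0.
Proof.
move=> ha hb.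
have -> : (fun t => ip (a t) (b t)) =
  (fun t => (`|a t + b t| ^+ 2 - `|a t - b t| ^+ 2) / 4).
  by apply/funext => t; rewrite ip_polar.
rewrite ip_polar.
apply: cvgMr_tmp; apply: cvgB; rewrite !expr2; apply: cvgM;
  apply: cvg_norm; (apply: cvgD || apply: cvgB) => //; exact: cvgN.
Qed.

End IP.

Theorem theorem1 (R : realType)
  (V W : normedModType R) (ipV : V -> V -> R) (ipW : W -> W -> R)
  (A : {linear V -> V}) (B : {linear W -> W}) (Binv : W -> W)
  (G : {linear W -> V}) (D : {linear V -> W})
  (alpha S : R)
  (u : R -> V) (p : R -> W) (f : R -> W) :
  is_inner_product ipV -> is_inner_product ipW ->
  selfadjoint ipV A -> nonneg_op ipV A ->
  selfadjoint ipW B -> positive_op ipW B ->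
  (forall g : W, B (Binv g) = g) -> (forall q : W, Binv (B q) = q) ->
  (forall (q : W) (v : V), ipV (G q) v = - ipW (D v) q) ->
  0 <= S ->
  (* regularity of the solution and of the data *)
  (forall t : R, 0 < t -> derivable u t 1 /\ derivable p t 1) ->
  {within `[0, +oo[, continuous u} ->
  {within `[0, +oo[, continuous p} ->
  {within `[0, +oo[, continuous (fun t => A (u t))} ->
  {within `[0, +oo[, continuous (fun s => op_sqnorm ipW Binv (f s))} ->
  (* the equations *)
  (forall t : R, 0 < t -> A (u t) + alpha *: G (p t) = 0) ->
  (forall t : R, 0 < t ->
     derivable (fun s => S *: p s + alpha *: D (u s)) t 1 /\
     derive1 (fun s => S *: p s + alpha *: D (u s)) t + B (p t) = f t) ->
  forall t : R, 0 < t ->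
    ((op_sqnorm ipV A (u t) + S * ipW (p t) (p t))%:E <=
     (op_sqnorm ipV A (u 0) + S * ipW (p 0) (p 0))%:E
     + (2^-1)%:E * \int[lebesgue_measure]_(s in `[0%R, t]%classic) (op_sqnorm ipW Binv (f s))%:E)%E.
Proof.
move=> hV hW sA nA sB pB BBi BiB hGD S0 hder cu cp cAu cg heq1 heq2 t t0.
rewrite /op_sqnorm.
set w := fun s => S *: p s + alpha *: D (u s).
set E := fun s => ipV (A (u s)) (u s) + S * ipW (p s) (p s).
set g := fun s => ipW (Binv (f s)) (f s).
have eA s : 0 < s -> alpha *: G (p s) = - A (u s).
  by move=> s0; apply/eqP; rewrite -addr_eq0 addrC heq1.
have hDG q v : ipW (D v) q = - ipV (G q) v by rewrite hGD opprK.
have iden a b : 0 < a -> 0 < b -> E a - E b = ipW (w a - w b) (p a + p b).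
  move=> a0 b0; rewrite /E /w.
  have -> : S *: p a + alpha *: D (u a) - (S *: p b + alpha *: D (u b)) =
     S *: (p a - p b) + alpha *: D (u a - u b).
    by rewrite [D (_ - _)]linearB /= !scalerBr opprD addrACA.
  rewrite (ipDl hW) !(ipZl hW) hDG [G (_ + _)]linearD /= (ipDl hV) mulrN mulrDr.
  rewrite -!(ipZl hV) !eA // !(ipNl hV) !(ipBr hV) !(ipBl hW) !(ipDr hW).
  rewrite (ipC hW (p b) (p a)) (sA (u a) (u b)) (ipC hV (u a) (A (u b))).
  lra.
have dE (c : R) : 0 < c -> is_derive c (1:R) E (2 * ipW ('D_1 w c) (p c)).
  move=> c0; have [_ dp] := hder c c0; have [dw _] := heq2 c c0.
  have pc : {for c, continuous p}.
    by apply/differentiable_continuous/derivable1_diffP.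
  have H : {near 0^', (fun h => ipW (h^-1 *: ((w \o shift c) (h *: 1) - w c))
       ((p \o shift c) h + p c)) =1
     (fun h => h^-1 *: ((E \o shift c) (h *: 1) - E c))}.
    near=> h => /=.
    have hh : h *: (1:R) = h by rewrite /GRing.scale /= mulr1.
    rewrite hh iden ?(ipZl hW) //.
    have : `|h| < c by near: h; exact: dnbhs0_lt.
    rewrite ltr_norml => /andP[] ; lra.
  have L : (fun h => h^-1 *: ((E \o shift c) (h *: 1) - E c)) @ 0^' -->
      2 * ipW ('D_1 w c) (p c).
    apply: cvg_trans (near_eq_cvg H) _.
    have -> : 2 * ipW ('D_1 w c) (p c) = ipW ('D_1 w c) (p c + p c).
      by rewrite (ipDr hW); lra.
    apply: (ip_cvg hW); first exact: dw.
    by apply: cvgD; [exact/continuous_withinNshiftx | exact: cvg_cst].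
  apply: DeriveDef; first exact: cvgP L.
  exact: (cvg_lim (@Rhausdorff R) L).
have sub (b : R) : `[0, b] `<=` `[0, +oo[.
  by move=> x /=; rewrite !in_itv /= => /andP[-> _].
set mu := @lebesgue_measure R.
have ig (b : R) : mu.-integrable `[0, b] (EFin \o g).
  apply: continuous_compact_integrable; first exact: segment_compact.
  exact: continuous_subspaceW (sub b) cg.
set Int := fun x : R => \int[mu]_(s in `[0, x]) g s.
have dInt (c : R) : 0 < c -> is_derive c (1:R) Int (g c).
  move=> c0.
  have gc : {for c, continuous g}.
    apply: (@within_continuous_continuous _ _ _ 0 (c + 1)); first lra.
      exact: continuous_subspaceW (sub _) cg.
    by rewrite in_itv /=; apply/andP; split; lra.
  have [d1 d2] := @continuous_FTC1_closed R g 0 c (c + 1) ltac:(lra) (ig _) c0 gc.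
  by apply: DeriveDef => //; rewrite -derive1E.
set F := E - 2^-1 \*: Int.
have hEc : {within `[0, t], continuous E}.
  move=> x; apply: cvgD.
    apply: (ip_cvg hV).
      exact: (continuous_subspaceW (sub t) cAu).
    exact: (continuous_subspaceW (sub t) cu).
  apply: cvgMl_tmp; apply: (ip_cvg hW); exact: (continuous_subspaceW (sub t) cp).
have hIc : {within `[0, t], continuous Int}.
  exact: (@parameterized_integral_continuous R 0 t g (ltW t0) (ig t)).
have hFc : {within `[0, t], continuous F}.
  move=> x; apply: cvgB; first exact: hEc.
  exact: cvgZl_tmp (hIc x).
have dF : forall x, x \in `]0, t[ ->
    is_derive x (1:R) F (2 * ipW ('D_1 w x) (p x) - 2^-1 *: g x).
  move=> x; rewrite in_itv /= => /andP[x0 _].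
  have := dE x x0; have := dInt x x0 => h1 h2.
  exact: is_deriveB.
have [c cI Hc] := @MVT R F (fun c => 2 * ipW ('D_1 w c) (p c) - 2^-1 *: g c)
   0 t t0 dF hFc.
have c0 : 0 < c by move: cI; rewrite in_itv /= => /andP[].
have Dw : 'D_1 w c = f c - B (p c).
  by have [_ h] := heq2 c c0; rewrite -h -derive1E addrK.
have Hneg : 2 * ipW ('D_1 w c) (p c) - 2^-1 *: g c <= 0.
  rewrite Dw /g /GRing.scale /=.
  set q := Binv (f c).
  have fq : f c = B q by rewrite /q BBi.
  rewrite fq.
  have pos : 0 <= ipW (B (p c - 2^-1 *: q)) (p c - 2^-1 *: q).
    case: (eqVneq (p c - 2^-1 *: q) 0) => [->|ne].
      by rewrite linear0 (ip0l hW).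
    exact/ltW/pB.
  move: pos; rewrite linearB linearZ /= !(ipBl hW) !(ipBr hW) !(ipZl hW) !(ipZr hW).
  rewrite (sB q (p c)) (ipC hW q (B (p c))) (ipC hW q (B q)).
  lra.
have Int0 : Int 0 = 0 by rewrite /Int set_itv1 Rintegral_set1.
have key : F t - F 0 <= 0.
  by rewrite Hc; apply: mulr_le0_ge0 => //; rewrite subr0 ltW.
have Fx x : F x = E x - 2^-1 * Int x by [].
move: key; rewrite !Fx Int0 /E => key.
have -> : (\int[mu]_(s in `[0%R, t]) (ipW (Binv (f s)) (f s))%:E)%E = (Int t)%:E.
  by rewrite /Int /Rintegral fineK // integrable_fin_num // (ig t).
rewrite -EFinM -EFinD lee_fin.
lra.
Unshelve. all: by end_near.
Qed.
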